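(* For $z=x+iy\in\mathbb{C}$ (with $x,y\in\mathbb{R}$) put $$A(z)=1-y,\qquad B(z)=x^2+y^2-y,\qquad C(z)=y,$$ and $\delta(z)=\delta\big(A(z),B(z),C(z)\big)$, where $\delta$ is the Apollonian depth function on real triples. Consider the maps $$F(x,y)=(x,\,1-y),\qquad S(x,y)=\Big(\tfrac{x}{x^2+y^2},\,\tfrac{y}{x^2+y^2}\Big)\ \ ((x,y)\neq(0,0)),$$ $$R(x,y)=\Big(\tfrac{x}{x^2+(y-1)^2},\,\tfrac{x^2+y^2-y}{x^2+(y-1)^2}\Big)\ \ ((x,y)\neq(0,1)),$$ i.e. $F$ is the reflection in the line $y=1/2$, $S$ is the inversion in the circle $x^2+y^2=1$, and $R$ is the inversion in the circle $x^2+(y-1)^2=1$. Then, for every $z$ in the domain of the respective map, there is a real number $\lambda>0$ (depending on the map and on $z$) such that $$\big(A(Fz),B(Fz),C(Fz)\big)=\big(C(z),B(z),A(z)\big),$$ $$\big(A(Sz),B(Sz),C(Sz)\big)=\lambda\big(B(z),A(z),C(z)\big),$$ $$\big(A(Rz),B(Rz),C(Rz)\big)=\lambda\big(A(z),C(z),B(z)\big),$$ i.e. $F$ interchanges $C$ and $A$, $S$ interchanges $A$ and $B$, and $R$ interchanges $B$ and $C$, up to a common positive rescaling of the three values. Moreover $\delta(Fz)=\delta(z)$, $\delta(Sz)=\delta(z)$ and $\delta(Rz)=\delta(z)$.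
   Context: The Apollonian depth function $\delta:\mathbb{R}^3\to\mathbb{N}\cup\{\infty\}$ is defined as follows. If any of $a,b,c$ is $\le 0$, then $\delta(a,b,c)=0$. Otherwise one performs a process: one step replaces the greatest entry of the current triple by $a+b+c-2\sqrt{ab+bc+ca}$ (where $a,b,c$ are the current entries). The step is repeated until the newly produced number is negative or $0$; $\delta(a,b,c)$ is the number of steps performed (counting the step that produces the non-positive number), and $\delta(a,b,c)=\infty$ if this never happens. For example $(179,62,23)\to(62,23,6)\to(23,6,3)\to(3,2,-1)$, so $\delta(179,62,23)=3$. Geometrically, $A(z),B(z),C(z)$ are (up to a common positive scale) the signed curvatures of the three mutually tangent disks of a tricycle whose two tangency spinors, normalized, are $(1,0)$ and $(x,y)$. *)

(* Defs.v *)
From HB Require Import structures.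
From mathcomp Require Import all_boot all_order all_algebra.
From mathcomp Require Import boolp reals.
Set Implicit Arguments. Unset Strict Implicit. Unset Printing Implicit Defensive.
Import Order.TTheory GRing.Theory Num.Theory.
Local Open Scope ring_scope.

Section Apollonian.
Variable R : realType.

Definition apo_new (a b c : R) : R :=
  a + b + c - 2 * Num.sqrt (a * b + b * c + c * a).

Definition apo_step (t : R * R * R) : R * R * R :=
  let: (a, b, c) := t in
  let n := apo_new a b c in
  if (b <= a) && (c <= a) then (n, b, c)
  else if c <= b then (a, n, c) else (a, b, n).

(* the number produced by step k+1 (steps counted from 1) *)
Definition apo_produced (t : R * R * R) (k : nat) : R :=
  let: (a, b, c) := iter k apo_step t in apo_new a b c.

(* Apollonian depth; None encodes infinity *)
Definition apo_depth (a b c : R) : option nat :=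
  if [|| a <= 0, b <= 0 | c <= 0] then Some 0%N
  else match pselect (exists k : nat, apo_produced (a, b, c) k <= 0) with
       | left h => Some (@ex_minn (fun k => apo_produced (a, b, c) k <= 0) h).+1
       | right _ => None
       end.

Definition Az (p : R * R) : R := 1 - p.2.
Definition Bz (p : R * R) : R := p.1 ^+ 2 + p.2 ^+ 2 - p.2.
Definition Cz (p : R * R) : R := p.2.
Definition deltaz (p : R * R) : option nat := apo_depth (Az p) (Bz p) (Cz p).

Definition Fmap (p : R * R) : R * R := (p.1, 1 - p.2).
Definition Smap (p : R * R) : R * R :=
  (p.1 / (p.1 ^+ 2 + p.2 ^+ 2), p.2 / (p.1 ^+ 2 + p.2 ^+ 2)).
Definition Rmap (p : R * R) : R * R :=
  (p.1 / (p.1 ^+ 2 + (p.2 - 1) ^+ 2),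
   (p.1 ^+ 2 + p.2 ^+ 2 - p.2) / (p.1 ^+ 2 + (p.2 - 1) ^+ 2)).
End Apollonian.

(* Main.v *)
Require Import Defs.
From HB Require Import structures.
From mathcomp Require Import all_boot all_order all_algebra.
From mathcomp Require Import boolp reals.
From mathcomp Require Import ring lra zify.
Set Implicit Arguments. Unset Strict Implicit.
Import Order.TTheory GRing.Theory Num.Theory.
Local Open Scope ring_scope.

Section Aux.
Variable R : realType.

Definition sq (t : R * R * R) : seq R := [:: t.1.1; t.1.2; t.2].
Definition sumx (s : seq R) := \sum_(x <- s) x.
Definition sumsq (s : seq R) := \sum_(x <- s) x ^+ 2.
Definition newS (s : seq R) :=
  sumx s - 2 * Num.sqrt ((sumx s ^+ 2 - sumsq s) / 2).

Lemma apo_newE a b c : apo_new a b c = newS [:: a; b; c].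
Proof.
rewrite /apo_new /newS /sumx /sumsq !big_cons !big_nil.
congr (_ - 2 * Num.sqrt _); first ring.
by field.
Qed.

Lemma newS_perm s s' : perm_eq s s' -> newS s = newS s'.
Proof. by move=> p; rewrite /newS /sumx /sumsq !(perm_big _ p). Qed.

Lemma newS_scale l s : 0 < l -> newS (map ( *%R l) s) = l * newS s.
Proof.
move=> l0; rewrite /newS /sumx /sumsq !big_map.
have -> : \sum_(i <- s) (l * i) ^+ 2 = l ^+ 2 * \sum_(i <- s) i ^+ 2.
  by rewrite mulr_sumr; apply: eq_bigr => i _; rewrite exprMn.
rewrite -!mulr_sumr.
set X := \sum_(j <- s) j. set Y := \sum_(j <- s) j ^+ 2.
have -> : ((l * X) ^+ 2 - l ^+ 2 * Y) / 2 = l ^+ 2 * ((X ^+ 2 - Y) / 2) by ring.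
rewrite sqrtrM ?sqr_ge0 // sqrtr_sqr gtr0_norm //; ring.
Qed.


Lemma perm3 (x y z u v w : R) : (forall p : pred R, (p x + (p y + p z) = p u + (p v + p w))%N) ->
  perm_eq [:: x; y; z] [:: u; v; w].
Proof. by move=> H; apply/permP => p /=; rewrite !addn0 H. Qed.

Lemma step_perm t m : m \in sq t -> all (fun x => x <= m) (sq t) ->
  perm_eq (sq (@apo_step R t)) (newS (sq t) :: rem m (sq t)).
Proof.
case: t => [[a b] c]; rewrite /sq /apo_step /= -apo_newE.
rewrite !inE => Hm /and4P [ha hb hc _].
set n := apo_new a b c.
case: ifP => [/andP[ba ca]|H1].
  have -> : m = a.
    apply/le_anti; rewrite ha andbT.
    by case/or3P: Hm => /eqP ->.
  by rewrite /= eqxx.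
have {H1} H1 : (a < b) || (a < c) by rewrite !ltNge -negb_and H1.
case: ifP => [cb|/negbT H2].
  have ab : a <= b by case/orP: H1 => h; lra.
  have -> : m = b.
    apply/le_anti; rewrite hb andbT.
    by case/or3P: Hm => /eqP ->.
  rewrite /=; case: eqP => [->|_]; rewrite ?eqxx; apply: perm3 => p; lia.
rewrite -ltNge in H2.
have ac : a < c by case/orP: H1 => h; lra.
have -> : m = c.
  apply/le_anti; rewrite hc andbT.
  by case/or3P: Hm => /eqP ->; lra.
rewrite /=; case: eqP => [->|_]; first by apply: perm3 => p; lia.
case: eqP => [->|_]; rewrite ?eqxx; apply: perm3 => p; lia.
Qed.

Lemma max3 t : exists m, m \in sq t /\ all (fun x => x <= m) (sq t).
Proof.
case: t => [[a b] c]; rewrite /sq /=.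
have [ab|ba] := leP a b; have [bc|cb] := leP b c; have [ac|ca]:= leP a c;
first [ exists a; rewrite !inE eqxx /= andbT; split => //; apply/and3P; split; lra
      | exists b; rewrite !inE eqxx ?orbT /= andbT; split => //; apply/and3P; split; lra
      | exists c; rewrite !inE eqxx ?orbT /= andbT; split => //; apply/and3P; split; lra].
Qed.

Lemma rem_perm (x : R) s s' : x \in s -> perm_eq s s' -> perm_eq (rem x s) (rem x s').
Proof.
move=> xs P; have xs' : x \in s' by rewrite -(perm_mem P).
rewrite -(perm_cons x); apply: perm_trans (perm_to_rem xs').
by rewrite perm_sym; apply: perm_trans (perm_to_rem xs); rewrite perm_sym.
Qed.

Lemma map_rem_inj (f : R -> R) x s : injective f -> rem (f x) (map f s) = map f (rem x s).
Proof. by move=> fi; elim: s => //= y s IH; rewrite (inj_eq fi); case: eqP => // _; rewrite IH. Qed.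

Lemma Inv_step l t t' : 0 < l -> perm_eq (sq t') (map ( *%R l) (sq t)) ->
  perm_eq (sq (@apo_step R t')) (map ( *%R l) (sq (@apo_step R t))).
Proof.
move=> l0 P; have [m [mi ma]] := max3 t.
have mi' : l * m \in sq t' by rewrite (perm_mem P) map_f.
have ma' : all (fun x => x <= l * m) (sq t').
  by rewrite (perm_all _ P) all_map; apply: sub_all ma => x /=; rewrite ler_pM2l.
apply: (perm_trans (step_perm mi' ma')).
rewrite (newS_perm P) newS_scale //.
have li : injective ( *%R l) by apply: mulfI; rewrite gt_eqF.
apply: (@perm_trans _ (l * newS (sq t) :: rem (l * m) (map ( *%R l) (sq t)))).
  by rewrite perm_cons; apply: rem_perm.
rewrite (map_rem_inj _ _ li).
have := perm_map ( *%R l) (step_perm mi ma); rewrite perm_sym /=.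
exact.
Qed.

Lemma Inv_iter l t t' k : 0 < l -> perm_eq (sq t') (map ( *%R l) (sq t)) ->
  perm_eq (sq (iter k (@apo_step R) t')) (map ( *%R l) (sq (iter k (@apo_step R) t))).
Proof. by move=> l0 P; elim: k => //= k IH; apply: Inv_step. Qed.

Lemma producedE t k : apo_produced t k = newS (sq (iter k (@apo_step R) t)).
Proof. by rewrite /apo_produced; case: (iter k (@apo_step R) t) => [[a b] c]; rewrite apo_newE. Qed.

Lemma prod_scale l t t' k : 0 < l -> perm_eq (sq t') (map ( *%R l) (sq t)) ->
  apo_produced t' k = l * apo_produced t k.
Proof.
by move=> l0 P; rewrite !producedE (newS_perm (Inv_iter k l0 P)) newS_scale.
Qed.

Lemma depth_inv l a b c a' b' c' : 0 < l ->
  perm_eq [:: a'; b'; c'] (map ( *%R l) [:: a; b; c]) ->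
  @apo_depth R a' b' c' = apo_depth a b c.
Proof.
move=> l0 P; rewrite /apo_depth.
have -> : [|| a' <= 0, b' <= 0 | c' <= 0] = [|| a <= 0, b <= 0 | c <= 0].
  transitivity (has (fun x => x <= 0) [:: a'; b'; c']); first by rewrite /= orbF.
  by rewrite (perm_has _ P) has_map /= orbF !pmulr_rle0.
case: ifP => // _.
have E : forall k, (apo_produced (a', b', c') k <= 0) = (apo_produced (a, b, c) k <= 0).
  by move=> k; rewrite (prod_scale (t:=(a,b,c)) (t':=(a',b',c')) k l0 P) pmulr_rle0.
case: pselect => [h'|n']; case: pselect => [h|n] //.
- by congr Some; congr S; apply: eq_ex_minn.
- by exfalso; apply: n; case: h' => k; rewrite E; exists k.
- by exfalso; apply: n'; case: h => k; rewrite -E; exists k.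
Qed.
End Aux.
Lemma depth_tri (R : realType) (p q : R * R * R) : p = q ->
  apo_depth p.1.1 p.1.2 p.2 = apo_depth q.1.1 q.1.2 q.2.
Proof. by move->. Qed.

Theorem proposition2 (R : realType) :
  (forall x y : R,
     (Az (Fmap (x, y)), Bz (Fmap (x, y)), Cz (Fmap (x, y)))
       = (Cz (x, y), Bz (x, y), Az (x, y))
     /\ deltaz (Fmap (x, y)) = deltaz (x, y))
  /\
  (forall x y : R, (x, y) != (0, 0) ->
     (exists2 lam : R, 0 < lam &
       (Az (Smap (x, y)), Bz (Smap (x, y)), Cz (Smap (x, y)))
         = (lam * Bz (x, y), lam * Az (x, y), lam * Cz (x, y)))
     /\ deltaz (Smap (x, y)) = deltaz (x, y))
  /\
  (forall x y : R, (x, y) != (0, 1) ->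
     (exists2 lam : R, 0 < lam &
       (Az (Rmap (x, y)), Bz (Rmap (x, y)), Cz (Rmap (x, y)))
         = (lam * Az (x, y), lam * Cz (x, y), lam * Bz (x, y)))
     /\ deltaz (Rmap (x, y)) = deltaz (x, y)).
Proof.
split; [|split].
- move=> x y.
  have E : (Az (Fmap (x, y)), Bz (Fmap (x, y)), Cz (Fmap (x, y)))
       = (Cz (x, y), Bz (x, y), Az (x, y)).
    by rewrite /Az /Bz /Cz /Fmap /=; congr (_, _, _); ring.
  split => //; rewrite /deltaz (depth_tri E) /=.
  apply: (@depth_inv R 1) => //; rewrite /= !mul1r; apply: perm3 => p; move: (p _) (p _) (p _) => u v w; lia.
- move=> x y nz.
  have d0 : x ^+ 2 + y ^+ 2 != 0.
    apply: contra nz; rewrite paddr_eq0 ?sqr_ge0 // !sqrf_eq0 => /andP[/eqP-> /eqP->] //.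
  have dp : 0 < x ^+ 2 + y ^+ 2 by rewrite lt_def d0 addr_ge0 ?sqr_ge0.
  set lam := (x ^+ 2 + y ^+ 2)^-1.
  have E : (Az (Smap (x, y)), Bz (Smap (x, y)), Cz (Smap (x, y)))
         = (lam * Bz (x, y), lam * Az (x, y), lam * Cz (x, y)).
    by rewrite /lam /Az /Bz /Cz /Smap /=; congr (_, _, _); field.
  split; first by exists lam; rewrite // invr_gt0.
  rewrite /deltaz (depth_tri E) /=.
  apply: (@depth_inv R lam); first by rewrite invr_gt0.
  by apply: perm3 => p; rewrite /Az /Bz /Cz /=; move: (p _) (p _) (p _) => u v w; lia.
- move=> x y nz.
  have d0 : x ^+ 2 + (y - 1) ^+ 2 != 0.
    apply: contra nz; rewrite paddr_eq0 ?sqr_ge0 // !sqrf_eq0 subr_eq0.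
    by case/andP => /eqP-> /eqP->.
  have dp : 0 < x ^+ 2 + (y - 1) ^+ 2 by rewrite lt_def d0 addr_ge0 ?sqr_ge0.
  set lam := (x ^+ 2 + (y - 1) ^+ 2)^-1.
  have E : (Az (Rmap (x, y)), Bz (Rmap (x, y)), Cz (Rmap (x, y)))
         = (lam * Az (x, y), lam * Cz (x, y), lam * Bz (x, y)).
    by rewrite /lam /Az /Bz /Cz /Rmap /=; congr (_, _, _); field.
  split; first by exists lam; rewrite // invr_gt0.
  rewrite /deltaz (depth_tri E) /=.
  apply: (@depth_inv R lam); first by rewrite invr_gt0.
  by apply: perm3 => p; rewrite /Az /Bz /Cz /=; move: (p _) (p _) (p _) => u v w; lia.
Qed.
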